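(* For each $n\ge1$ and each $k\ge0$, the number of plane trees with $n$ edges and exactly $k$ young leaves equals the number of Dyck paths of length $2n$ with exactly $k$ peaks at even height (a peak $UD$ being at height $h$ if its top point has $y$-coordinate $h$).
   Context: A plane tree is a rooted tree in which the children of each vertex are linearly ordered (left to right). A leaf is a vertex with no children; by convention the tree consisting of a single vertex (no edges) has no leaves. A leaf is a young leaf if it is not the leftmost child of its parent. A Dyck path of length $2n$ is a lattice path from $(0,0)$ to $(2n,0)$ with steps $U=(1,1)$, $D=(1,-1)$ never going below the $x$-axis; a peak is an occurrence of consecutive steps $UD$. *)

(* Defs.v *)
From mathcomp Require Import all_boot.
Set Implicit Arguments. Unset Strict Implicit. Unset Printing Implicit Defensive.

Inductive ptree : Type := Node of seq ptree.

Definition children (t : ptree) : seq ptree := let: Node ts := t in ts.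

Fixpoint edges (t : ptree) : nat :=
  let: Node ts := t in sumn (map (fun u => (edges u).+1) ts).

Definition is_leaf_child (t : ptree) : bool := nilp (children t).

(* young leaves: leaves that are not the leftmost child of their parent.
   The root is never counted (it has no parent). *)
Fixpoint young_leaves (t : ptree) : nat :=
  let: Node ts := t in
  count is_leaf_child (behead ts) + sumn (map young_leaves ts).

(* Dyck paths as boolean words: true = U = (1,1), false = D = (1,-1). *)
Definition nU (s : seq bool) : nat := count id s.
Definition nD (s : seq bool) : nat := count negb s.

Definition dyck (s : seq bool) : bool :=
  all (fun i => nD (take i s) <= nU (take i s)) (iota 0 (size s).+1)
  && (nU s == nD s).

(* height reached after the first i steps (meaningful when nonnegative) *)
Definition height_after (s : seq bool) (i : nat) : nat :=
  nU (take i s) - nD (take i s).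

(* A peak is an occurrence of U at position i followed by D at position i+1;
   its height is the height of its top point, i.e. after i+1 steps. *)
Definition is_peak (s : seq bool) (i : nat) : bool :=
  (i.+1 < size s) && nth false s i && ~~ nth false s i.+1.

Definition even_peaks (s : seq bool) : nat :=
  count (fun i => is_peak s i && ~~ odd (height_after s i.+1)) (iota 0 (size s)).

(* Main.v *)
Require Import Defs.
From mathcomp Require Import all_boot.
From mathcomp Require Import zify.
From Stdlib Require Import ClassicalEpsilon ProofIrrelevance.

Fixpoint E (t : ptree) : seq bool * seq bool :=
  let: Node c := t in
  (fix F (l : seq ptree) : seq bool * seq bool :=
     match l with
     | [::] => ([::], [::])
     | u :: g => let: (p1, p0) := F g in let: (c1, c0) := E u in
                 (true :: p0 ++ false :: c1, true :: c1 ++ false :: p0)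
     end) c.

Definition enc1 f := (E (Node f)).1.
Definition enc0 f := (E (Node f)).2.

Lemma enc_nil : enc1 [::] = [::] /\ enc0 [::] = [::].
Proof. by []. Qed.

Lemma E_cons c g : E (Node (Node c :: g)) =
  let: (p1, p0) := E (Node g) in let: (c1, c0) := E (Node c) in
                 (true :: p0 ++ false :: c1, true :: c1 ++ false :: p0).
Proof. by []. Qed.

Lemma enc1_cons c g : enc1 (Node c :: g) = true :: enc0 g ++ false :: enc1 c.
Proof. rewrite /enc1 /enc0 E_cons. by case: (E (Node c)); case: (E (Node g)). Qed.

Lemma enc0_cons c g : enc0 (Node c :: g) = true :: enc1 c ++ false :: enc0 g.
Proof. rewrite /enc1 /enc0 E_cons. by case: (E (Node c)); case: (E (Node g)). Qed.

Definition vf f := edges (Node f).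
Lemma vf_cons c g : vf (Node c :: g) = (vf c).+1 + vf g.
Proof. by []. Qed.

Lemma forest_ind (P : seq ptree -> Prop) : P [::] ->
  (forall c g, P c -> P g -> P (Node c :: g)) -> forall f, P f.
Proof.
move=> H0 HS f; have: vf f < (vf f).+1 by [].
elim: (vf f).+1 {-2}f => // m IH [|[c] g] Hlt //.
rewrite vf_cons in Hlt; apply: HS; apply: IH; lia.
Qed.

Fixpoint dk (h : nat) (s : seq bool) : bool :=
  match s with
  | [::] => h == 0
  | true :: r => dk h.+1 r
  | false :: r => if h is h'.+1 then dk h' r else false
  end.

Lemma dk_cat a c h m : dk h a -> dk m c -> dk (h + m) (a ++ c).
Proof.
elim: a h => [|x a IH] h /=; first by move/eqP->.
case: x => [|]; first by move=> Ha Hc; exact: (IH h.+1).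
by case: h => // h Ha Hc; exact: IH.
Qed.

Lemma dk_split n s h : size s <= n -> dk h.+1 s ->
  exists a b, s = a ++ false :: b /\ dk 0 a /\ dk h b.
Proof.
elim: n s h => [|n IH] [|x r] h //= Hs.
case: x => [|] Hd; last by exists [::], r.
have [a1 [b1 [Er [Ha1 Hb1]]]] := IH r h.+1 Hs Hd.
have Hb1s : size b1 <= n by move: Hs; rewrite Er size_cat /=; lia.
subst r.
have [a2 [b2 [-> [Ha2 Hb2]]]] := IH b1 h Hb1s Hb1.
exists (true :: a1 ++ false :: a2), b2; split; first by rewrite /= -catA.
split => //=. exact: (dk_cat a1 (false :: a2) 0 1 Ha1 Ha2).
Qed.

Lemma dk_prefix a a' c c' h : dk h a -> dk h a' ->
  a ++ false :: c = a' ++ false :: c' -> a = a' /\ c = c'.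
Proof.
elim: a a' h => [|x a IH] [|x' a'] h.
- by move=> _ _ [].
- by move=> /= /eqP -> H [] Ex; subst x'.
- by move=> H /= /eqP Eh [] Ex; subst x h.
- move=> Ha Ha' [Ex Er]; subst x'.
  case: x Ha Ha' => [|] /= Ha Ha'.
  + by have [-> ->] := IH a' _ Ha Ha' Er.
  + case: h Ha Ha' => // h Ha Ha'.
    by have [-> ->] := IH a' _ Ha Ha' Er.
Qed.

Lemma dk_last h s z : dk h s -> last z s = if s is [::] then z else false.
Proof.
elim: s h z => [|x s IH] h z //=.
case: s IH => [|y s] IH.
- by case: x; case: h.
- move=> H; apply: (IH (if x then h.+1 else h.-1) y).
  by case: x H => //; case: h.
Qed.

Definition nUD t : nU t + nD t = size t.
Proof. by elim: t => //= -[] t IH /=; lia. Qed.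

Lemma all_iota_succ (P : pred nat) n :
  all P (iota 0 n.+1) = P 0 && all (fun i => P i.+1) (iota 0 n).
Proof.
by rewrite /= -[1]/(1+0) iotaDl all_map.
Qed.

Lemma dyckhE h s :
  all (fun i => nD (take i s) <= h + nU (take i s)) (iota 0 (size s).+1)
   && (h + nU s == nD s) = dk h s.
Proof.
elim: s h => [|x r IH] h; first by rewrite /= addn0.
rewrite [size _]/= all_iota_succ.
rewrite (@eq_all _ (fun i => nD (take i.+1 (x :: r)) <= h + nU (take i.+1 (x :: r)))
   (fun i => ~~ x + nD (take i r) <= h + (x + nU (take i r)))) //.
have -> : (nD (take 0 (x :: r)) <= h + nU (take 0 (x :: r))) = true by [].
have -> : nU (x :: r) = x + nU r by [].
have -> : nD (x :: r) = ~~ x + nD r by [].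
rewrite andTb.
case: x.
- rewrite [dk _ _]/= -IH; congr (_ && _).
  + by apply: eq_all => i /=; apply/idP/idP; lia.
  + by apply/eqP/eqP => /=; lia.
- case: h => [|h].
  + rewrite all_iota_succ [dk _ _]/=.
    have -> : (~~ false + nD (take 0 r) <= 0 + (false + nU (take 0 r))) = false by rewrite take0.
    by [].
  + rewrite [dk _ _]/= -IH.
    congr (_ && _).
Qed.

Lemma dyckE s : dyck s = dk 0 s.
Proof. by rewrite -dyckhE. Qed.

Fixpoint qk (b u : bool) (s : seq bool) : nat :=
  if s is x :: r then (~~ x && u && b) + qk (~~ b) x r else 0.

Lemma qk_cat b u a c :
  qk b u (a ++ c) = qk b u a + qk (b (+) odd (size a)) (last u a) c.
Proof.
elim: a b u => [|x a IH] b u /=; first by rewrite addbF.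
rewrite IH addnA; congr (_ + qk _ _ _).
by case: b; case: (odd (size a)).
Qed.

Lemma qk_u b u s : qk b u s = qk b false s + (~~ head true s && u && b).
Proof. case: s => [|x r] /=; first by case: u; case: b. by case: x; case: u; case: b => /=; lia. Qed.

Definition Pk (s : seq bool) (b : bool) :=
  count (fun i => is_peak s i && (odd i == b)) (iota 0 (size s)).

Lemma qkP b u s : qk b u s = (~~ head true s && u && b) + Pk s b.
Proof.
elim: s b u => [|x r IH] b u //=.
rewrite IH /Pk /= -[1]/(1+0) iotaDl count_map.
rewrite (@eq_count _ _ (fun i => is_peak r i && (odd i == ~~ b))); last first.
  move=> i /=; rewrite /is_peak /= ltnS add1n /=.
  by case: (odd i); case: b; rewrite ?andbT ?andbF.
rewrite /is_peak /=; clear IH.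
case: r => [|y r] /=; first by case: x; case: u; case: b.
by case: x; case: y; case: u; case: b => /=; lia.
Qed.

Lemma even_peaksE s : dk 0 s -> even_peaks s = qk true false s.
Proof.
rewrite -dyckE /dyck => /andP [Hall _].
rewrite qkP /even_peaks /Pk /=.
rewrite andbF add0n; apply: eq_count => i /=.
case Hp: (is_peak s i) => //=.
have Hi : i.+1 < size s by move: Hp; rewrite /is_peak => /andP [/andP [H _] _].
have /allP /(_ i.+1) := Hall.
rewrite mem_iota add0n ltnS (ltnW Hi) => /(_ isT) Hle.
rewrite /height_after oddB // -oddD nUD size_take Hi /=.
by case: (odd i).
Qed.

Definition A f := young_leaves (Node f).
Definition Ay f := count is_leaf_child f + sumn (map young_leaves f).

Lemma A_cons c g : A (Node c :: g) = A c + Ay g.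
Proof. rewrite /A /Ay /=; lia. Qed.

Lemma Ay_cons c g : Ay (Node c :: g) = nilp c + A c + Ay g.
Proof. rewrite /A /Ay /= /is_leaf_child /=; lia. Qed.

Lemma enc_size f : size (enc1 f) = (vf f).*2 /\ size (enc0 f) = (vf f).*2.
Proof.
elim/forest_ind: f => [//|c g [H1 H0] [G1 G0]].
rewrite enc1_cons enc0_cons vf_cons /= !size_cat /= ?H1 ?H0 ?G1 ?G0.
split; rewrite !doubleD; lia.
Qed.

Lemma enc_dk f : dk 0 (enc1 f) /\ dk 0 (enc0 f).
Proof.
elim/forest_ind: f => [//|c g [H1 H0] [G1 G0]].
rewrite enc1_cons enc0_cons /=; split.
- exact: (dk_cat _ (false :: enc1 c) 0 1 G0 H1).
- exact: (dk_cat _ (false :: enc0 g) 0 1 H1 G0).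
Qed.

Lemma enc_head f : head true (enc1 f) /\ head true (enc0 f).
Proof. by case: f => [|[c] g] //; rewrite enc1_cons enc0_cons. Qed.

Lemma enc_nilp f : nilp (enc1 f) = nilp f /\ nilp (enc0 f) = nilp f.
Proof. by case: f => [|[c] g] //; rewrite enc1_cons enc0_cons. Qed.

Lemma enc_qk f : qk true false (enc1 f) = A f /\ qk false false (enc0 f) = Ay f.
Proof.
elim/forest_ind: f => [//|c g [H1 H0] [G1 G0]].
rewrite enc1_cons enc0_cons A_cons Ay_cons /=.
have [s1 s0] := enc_size c; have [t1 t0] := enc_size g.
have [d1 d0] := enc_dk c; have [e1 e0] := enc_dk g.
rewrite !qk_cat s1 t0 !odd_double /=.
rewrite (dk_last _ _ true d1) (dk_last _ _ true e0).
rewrite (qk_u false true) (qk_u true true) H1 G0.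
have [n1 _] := enc_nilp c; have [_ m0] := enc_nilp g.
have [hd1 _] := enc_head c.
split.
- by rewrite !andbF /= addn0 add0n addnC.
- rewrite hd1 /=; move: n1; case: (enc1 c) => [|y l] /= <- /=; lia.
Qed.

Lemma enc_inj f : forall f', (enc1 f = enc1 f' -> f = f') /\ (enc0 f = enc0 f' -> f = f').
Proof.
elim/forest_ind: f => [|c g IHc IHg] [|[c'] g'] //.
- by rewrite enc1_cons enc0_cons.
- by rewrite enc1_cons enc0_cons.
rewrite !enc1_cons !enc0_cons.
have [d1 d0] := enc_dk c; have [e1 e0] := enc_dk g.
have [d1' d0'] := enc_dk c'; have [e1' e0'] := enc_dk g'.
split => -[] E.
- have [Eg Ec] := dk_prefix _ _ _ _ _ e0 e0' E.
  by rewrite ((IHc c').1 Ec) ((IHg g').2 Eg).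
- have [Ec Eg] := dk_prefix _ _ _ _ _ d1 d1' E.
  by rewrite ((IHc c').1 Ec) ((IHg g').2 Eg).
Qed.

Lemma enc_surj n : forall s, size s <= n -> dk 0 s ->
  (exists f, enc1 f = s) /\ (exists f, enc0 f = s).
Proof.
elim: n => [|n IH] [|[] r] //=; try by split; exists [::].
move=> Hs Hd.
have [a [b [Er [Ha Hb]]]] := dk_split (size r) r 0 (leqnn _) Hd.
have Hsa : size a <= n by move: Hs; rewrite Er size_cat /=; lia.
have Hsb : size b <= n by move: Hs; rewrite Er size_cat /=; lia.
have [[fa1 Ea1] [fa0 Ea0]] := IH a Hsa Ha.
have [[fb1 Eb1] [fb0 Eb0]] := IH b Hsb Hb.
split.
- by exists (Node fb1 :: fa0); rewrite enc1_cons Ea0 Eb1 Er.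
- by exists (Node fa1 :: fb0); rewrite enc0_cons Ea1 Eb0 Er.
Qed.

Definition encT (t : ptree) := enc1 (children t).

Lemma encT_ok t : [/\ dyck (encT t), size (encT t) = (edges t).*2
                    & even_peaks (encT t) = young_leaves t].
Proof.
case: t => f; rewrite /encT /=.
have [H _] := enc_dk f; have [S _] := enc_size f; have [Q _] := enc_qk f.
split.
- by rewrite dyckE.
- exact: S.
- by rewrite even_peaksE // Q.
Qed.

Theorem mainTheorem7 (n k : nat) : 1 <= n ->
  exists f : {t : ptree | edges t = n /\ young_leaves t = k} ->
             {s : seq bool | [/\ dyck s, size s = n.*2 & even_peaks s = k]},
    bijective f.
Proof.
move=> _.
have Hok : forall x : {t : ptree | edges t = n /\ young_leaves t = k},
    [/\ dyck (encT (sval x)), size (encT (sval x)) = n.*2 & even_peaks (encT (sval x)) = k].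
  move=> [t [Ht1 Ht2]] /=; have [H1 H2 H3] := encT_ok t.
  by rewrite H2 H3 Ht1 Ht2.
pose F x := exist (fun s => [/\ dyck s, size s = n.*2 & even_peaks s = k]) (encT (sval x)) (Hok x).
have Finj : injective F.
  move=> [t1 p1] [t2 p2] [] /=.
  case: t1 p1 => f1 p1; case: t2 p2 => f2 p2 /= E.
  have E' := (enc_inj f1 f2).1 E; subst f2.
  by rewrite (proof_irrelevance _ p1 p2).
have Fsurj : forall y, exists x, F x = y.
  move=> [s [Hd Hs He]].
  have Hd' : dk 0 s by rewrite -dyckE.
  have [[f Ef] _] := enc_surj (size s) s (leqnn _) Hd'.
  have Hx : edges (Node f) = n /\ young_leaves (Node f) = k.
    have [_ H2 H3] := encT_ok (Node f).
    move: H2 H3; rewrite /encT /= Ef Hs He => H2 H3; split => //.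
    exact: double_inj.
  exists (exist _ (Node f) Hx).
  rewrite /F; move: (Hok _); rewrite /= /encT /= Ef => p.
  by rewrite (proof_irrelevance _ p (And3 Hd Hs He)).
exists F.
exists (fun y => proj1_sig (constructive_indefinite_description _ (Fsurj y))).
- move=> x; apply: Finj.
  exact: (proj2_sig (constructive_indefinite_description _ (Fsurj (F x)))).
- move=> y; exact: (proj2_sig (constructive_indefinite_description _ (Fsurj y))).
Qed.
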